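(* Let $g:[a,b]\to\mathbb R$ be increasing and left-continuous at every point of $(a,b)$, and let $f:[a,b]\to\mathbb R$ be $g$-Lipschitz continuous with Lipschitz constant $H$. Then $f^B$ is $g^B$-Lipschitz continuous with Lipschitz constant $H$. Furthermore, if $f$ is increasing, then $f^C$ is $g^C$-Lipschitz continuous with Lipschitz constant $H$.
   Context: For a function $\varphi:[a,b]\to\mathbb R$ having right limits, $\Delta^+\varphi(t)=\varphi(t^+)-\varphi(t)$, its jump part is $\varphi^B(t)=\sum_{s\in[a,t)}\Delta^+\varphi(s)$ and its continuous part is $\varphi^C=\varphi-\varphi^B$ (applied to both $f$ and $g$). For functions $u,v$ on $[a,b]$, $u$ is $v$-Lipschitz continuous with constant $H$ if $|u(t)-u(s)|\le H|v(t)-v(s)|$ for all $t,s\in[a,b]$. *)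

(* Defs.v *)
From Stdlib Require Import Reals Lra List ClassicalEpsilon.
Import ListNotations.
Open Scope R_scope.

Definition v_lipschitz (a b : R) (u v : R -> R) (H : R) : Prop :=
  forall t s, a <= t <= b -> a <= s <= b -> Rabs (u t - u s) <= H * Rabs (v t - v s).

Definition nondecreasing_on (a b : R) (phi : R -> R) : Prop :=
  forall s t, a <= s -> s <= t -> t <= b -> phi s <= phi t.

Definition left_continuous_at (phi : R -> R) (t : R) : Prop :=
  forall eps, 0 < eps -> exists delta, 0 < delta /\
    forall x, t - delta < x <= t -> Rabs (phi x - phi t) < eps.

Definition is_right_lim (b : R) (phi : R -> R) (s L : R) : Prop :=
  forall eps, 0 < eps -> exists delta, 0 < delta /\
    forall x, s < x < s + delta -> x <= b -> Rabs (phi x - L) < eps.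

(* phi(s^+) (a chosen right limit; unique and existent under the hypotheses) *)
Definition right_lim (b : R) (phi : R -> R) (s : R) : R :=
  epsilon (inhabits 0) (fun L => is_right_lim b phi s L).

Definition right_jump (b : R) (phi : R -> R) (s : R) : R :=
  right_lim b phi s - phi s.

(* unconditional (summable-family) sum of x over the set P *)
Definition has_usum (P : R -> Prop) (x : R -> R) (L : R) : Prop :=
  forall eps, 0 < eps -> exists F0 : list R,
    NoDup F0 /\ Forall P F0 /\
    forall F : list R, NoDup F -> Forall P F -> incl F0 F ->
      Rabs (fold_right Rplus 0 (map x F) - L) < eps.

(* jump part: phi^B(t) = sum_{s in [a,t)} Delta^+ phi (s) *)
Definition jump_part (a b : R) (phi : R -> R) (t : R) : R :=
  epsilon (inhabits 0)
    (fun L => has_usum (fun s => a <= s < t) (right_jump b phi) L).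

(* continuous part: phi^C = phi - phi^B *)
Definition cont_part (a b : R) (phi : R -> R) (t : R) : R :=
  phi t - jump_part a b phi t.

(* Main.v *)
Require Import Defs.
From Stdlib Require Import Reals Lra Lia List ClassicalEpsilon.
Import ListNotations.
Open Scope R_scope.

Definition lsum (x : R -> R) (l : list R) := fold_right Rplus 0 (map x l).

Lemma lsum_nil x : lsum x [] = 0. Proof. reflexivity. Qed.
Lemma lsum_cons x a l : lsum x (a :: l) = x a + lsum x l. Proof. reflexivity. Qed.

Lemma lsum_lin c d x y l :
  lsum (fun z => c * x z + d * y z) l = c * lsum x l + d * lsum y l.
Proof. induction l; rewrite ?lsum_nil, ?lsum_cons. ring. rewrite IHl; ring. Qed.

Lemma lsum_ext x y l : (forall z, In z l -> x z = y z) -> lsum x l = lsum y l.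
Proof.
  induction l; intros E; rewrite ?lsum_nil, ?lsum_cons; auto.
  rewrite E by (left; auto). rewrite IHl; auto. intros; apply E; right; auto.
Qed.

Lemma lsum_filter x p l :
  lsum x l = lsum x (filter p l) + lsum x (filter (fun z => negb (p z)) l).
Proof.
  induction l; simpl; [rewrite ?lsum_nil; ring|].
  destruct (p a); simpl; rewrite ?lsum_cons, IHl; ring.
Qed.

Lemma lsum_abs_le x y l : (forall z, In z l -> Rabs (x z) <= y z) ->
  Rabs (lsum x l) <= lsum y l.
Proof.
  induction l; intros E; rewrite ?lsum_nil, ?lsum_cons.
  - rewrite Rabs_R0; lra.
  - eapply Rle_trans; [apply Rabs_triang|].
    assert (Rabs (x a) <= y a) by (apply E; left; auto).
    assert (Rabs (lsum x l) <= lsum y l) by (apply IHl; intros; apply E; right; auto).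
    lra.
Qed.

Lemma lsum_remove_le x a l : (forall z, In z l -> 0 <= x z) ->
  lsum x (remove Req_EM_T a l) <= lsum x l.
Proof.
  induction l; intros E; simpl; [lra|].
  assert (0 <= x a0) by (apply E; left; auto).
  assert (lsum x (remove Req_EM_T a l) <= lsum x l) by (apply IHl; intros; apply E; right; auto).
  destruct (Req_EM_T a a0); rewrite ?lsum_cons; lra.
Qed.

Lemma lsum_remove_in x a l : In a l -> (forall z, In z l -> 0 <= x z) ->
  x a + lsum x (remove Req_EM_T a l) <= lsum x l.
Proof.
  induction l; intros I E; simpl; [destruct I|].
  destruct (Req_EM_T a a0).
  - subst. rewrite lsum_cons.
    assert (lsum x (remove Req_EM_T a0 l) <= lsum x l) by (apply lsum_remove_le; intros; apply E; right; auto).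
    lra.
  - destruct I as [I|I]; [congruence|]. rewrite !lsum_cons.
    assert (x a + lsum x (remove Req_EM_T a l) <= lsum x l) by (apply IHl; auto; intros; apply E; right; auto).
    lra.
Qed.

Lemma lsum_incl_le x l1 l2 : NoDup l1 -> incl l1 l2 -> (forall z, In z l2 -> 0 <= x z) ->
  lsum x l1 <= lsum x l2.
Proof.
  revert l2; induction l1; intros l2 N I E; rewrite ?lsum_nil.
  - induction l2; rewrite ?lsum_nil, ?lsum_cons; [lra|].
    assert (0 <= x a) by (apply E; left; auto).
    assert (0 <= lsum x l2) by (apply IHl2; [intros z Hz; destruct Hz| intros; apply E; right; auto]).
    lra.
  - inversion N; subst. rewrite lsum_cons.
    assert (Ia : In a l2) by (apply I; left; auto).
    assert (lsum x l1 <= lsum x (remove Req_EM_T a l2)).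
    { apply IHl1; auto.
      - intros z Hz. apply in_in_remove. intro; subst; auto. apply I; right; auto.
      - intros z Hz. apply E. eapply in_remove; eauto. }
    pose proof (lsum_remove_in x a l2 Ia E). lra.
Qed.

Lemma lsum_nonneg x l : (forall z, In z l -> 0 <= x z) -> 0 <= lsum x l.
Proof.
  induction l; intros E; rewrite ?lsum_nil, ?lsum_cons; [lra|].
  assert (0 <= x a) by (apply E; left; auto).
  assert (0 <= lsum x l) by (apply IHl; intros; apply E; right; auto). lra.
Qed.

Lemma rl_lin b u v x L1 L2 c d :
  is_right_lim b u x L1 -> is_right_lim b v x L2 ->
  is_right_lim b (fun z => c * u z + d * v z) x (c * L1 + d * L2).
Proof.
  intros H1 H2 eps He.
  set (e' := eps / (Rabs c + Rabs d + 1)).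
  assert (Hp : 0 < Rabs c + Rabs d + 1) by (pose proof (Rabs_pos c); pose proof (Rabs_pos d); lra).
  assert (He' : 0 < e') by (unfold e'; apply Rdiv_lt_0_compat; lra).
  destruct (H1 e' He') as [d1 [Hd1 P1]]. destruct (H2 e' He') as [d2 [Hd2 P2]].
  exists (Rmin d1 d2). split. apply Rmin_pos; lra.
  intros z Hz Hb.
  assert (z < x + d1) by (pose proof (Rmin_l d1 d2); lra).
  assert (z < x + d2) by (pose proof (Rmin_r d1 d2); lra).
  specialize (P1 z ltac:(lra) Hb). specialize (P2 z ltac:(lra) Hb).
  replace (c * u z + d * v z - (c * L1 + d * L2)) with (c * (u z - L1) + d * (v z - L2)) by ring.
  eapply Rle_lt_trans; [apply Rabs_triang|]. rewrite !Rabs_mult.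
  assert (Rabs c * Rabs (u z - L1) <= Rabs c * e') by (apply Rmult_le_compat_l; [apply Rabs_pos|lra]).
  assert (Rabs d * Rabs (v z - L2) <= Rabs d * e') by (apply Rmult_le_compat_l; [apply Rabs_pos|lra]).
  assert (eps = (Rabs c + Rabs d + 1) * e') by (unfold e'; field; lra).
  nra.
Qed.

Lemma rl_ext b u v x L : (forall z, u z = v z) -> is_right_lim b u x L -> is_right_lim b v x L.
Proof.
  intros E H eps He. destruct (H eps He) as [d [Hd P]]. exists d; split; auto.
  intros; rewrite <- E; auto.
Qed.

Lemma right_lim_spec b phi x : (exists L, is_right_lim b phi x L) ->
  is_right_lim b phi x (right_lim b phi x).
Proof. intros E. unfold right_lim. apply epsilon_spec. exact E. Qed.

Lemma rl_mono_exists a b U x : nondecreasing_on a b U -> a <= x < b ->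
  exists L, is_right_lim b U x L.
Proof.
  intros M Hx.
  set (E := fun z => exists y, x < y <= b /\ z = - U y).
  assert (Hb : bound E).
  { exists (- U x). intros z [y [Hy ->]]. assert (U x <= U y) by (apply M; lra). lra. }
  assert (Hn : exists z, E z) by (exists (- U b); exists b; split; [lra|auto]).
  destruct (completeness E Hb Hn) as [m [Hub Hlub]].
  exists (- m). intros eps He.
  assert (exists y, x < y <= b /\ - U y > m - eps).
  { apply Classical_Prop.NNPP. intro N.
    assert (m <= m - eps); [|lra].
    apply Hlub. intros z [y [Hy ->]].
    destruct (Rle_dec (- U y) (m - eps)); auto. exfalso; apply N; exists y; split; auto; lra. }
  destruct H as [y [Hy Hy2]].
  exists (y - x). split; [lra|]. intros z Hz Hzb.
  assert (U z <= U y) by (apply M; lra).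
  assert (- U z <= m) by (apply Hub; exists z; split; [lra|auto]).
  apply Rabs_def1; lra.
Qed.

Lemma rl_ge a b U x L : nondecreasing_on a b U -> a <= x < b -> is_right_lim b U x L -> U x <= L.
Proof.
  intros M Hx HL. destruct (Rle_dec (U x) L) as [|N]; auto. exfalso.
  destruct (HL (U x - L) ltac:(lra)) as [d [Hd P]].
  set (z := Rmin (x + d / 2) b).
  assert (x < z) by (unfold z; apply Rmin_glb_lt; lra).
  assert (z <= b) by apply Rmin_r.
  assert (z <= x + d/2) by apply Rmin_l.
  specialize (P z ltac:(lra) ltac:(lra)).
  assert (U x <= U z) by (apply M; lra).
  apply Rabs_def2 in P. lra.
Qed.

Lemma rl_le a b U x y L : nondecreasing_on a b U -> a <= x -> x < y -> y <= b ->
  is_right_lim b U x L -> L <= U y.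
Proof.
  intros M Hx Hy Hyb HL. destruct (Rle_dec L (U y)) as [|N]; auto. exfalso.
  destruct (HL (L - U y) ltac:(lra)) as [d [Hd P]].
  set (z := Rmin (x + d / 2) y).
  assert (x < z) by (unfold z; apply Rmin_glb_lt; lra).
  assert (z <= y) by apply Rmin_r.
  assert (z <= x + d/2) by apply Rmin_l.
  specialize (P z ltac:(lra) ltac:(lra)).
  assert (U z <= U y) by (apply M; lra).
  apply Rabs_def2 in P. lra.
Qed.

Lemma rmin_list m t l : Forall (fun z => m < z) l -> m < t ->
  m < fold_right Rmin t l /\ fold_right Rmin t l <= t /\
  Forall (fun z => fold_right Rmin t l <= z) l.
Proof.
  induction l; intros F Ht; simpl; [split; [|split]; auto; lra|].
  inversion F; subst. destruct (IHl H2 Ht) as [A [B C]].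
  split; [apply Rmin_glb_lt; lra|]. split.
  - pose proof (Rmin_r a (fold_right Rmin t l)); lra.
  - constructor; [apply Rmin_l|].
    rewrite Forall_forall in *. intros z Hz. pose proof (Rmin_r a (fold_right Rmin t l)).
    specialize (C z Hz). lra.
Qed.

Lemma K_lemma a b U L : nondecreasing_on a b U ->
  (forall x, a <= x < b -> is_right_lim b U x (L x)) ->
  forall n G s t, (length G <= n)%nat -> NoDup G -> a <= s -> s <= t -> t <= b ->
  Forall (fun x => s <= x < t) G ->
  lsum (fun x => L x - U x) G <= U t - U s.
Proof.
  intros M HL n. induction n; intros G s t Hl N Hs Hst Htb F.
  - destruct G; [|simpl in Hl; lia]. rewrite lsum_nil. assert (U s <= U t) by (apply M; lra). lra.
  - destruct G as [|m G'].
    + rewrite lsum_nil. assert (U s <= U t) by (apply M; lra). lra.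
    + inversion N; subst. inversion F; subst. simpl in Hl.
      set (p := fun z => if Rlt_dec z m then true else false).
      rewrite lsum_cons, (lsum_filter _ p G').
      set (Glo := filter p G'). set (Ghi := filter (fun z => negb (p z)) G').
      assert (FGhi : Forall (fun z => m < z) Ghi).
      { apply Forall_forall. intros z Hz. unfold Ghi in Hz. apply filter_In in Hz as [Hz1 Hz2].
        unfold p in Hz2. destruct (Rlt_dec z m); simpl in Hz2; [discriminate|].
        assert (z <> m) by (intro; subst; auto). lra. }
      destruct (rmin_list m t Ghi FGhi ltac:(lra)) as [Y1 [Y2 Y3]].
      set (y := fold_right Rmin t Ghi) in *.
      assert (A1 : lsum (fun x => L x - U x) Glo <= U m - U s).
      { apply IHn; try lra.
        - unfold Glo. pose proof (filter_length_le p G'). lia.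
        - apply NoDup_filter; auto.
        - apply Forall_forall. intros z Hz. unfold Glo in Hz. apply filter_In in Hz as [Hz1 Hz2].
          unfold p in Hz2. destruct (Rlt_dec z m); simpl in Hz2; [|discriminate].
          rewrite Forall_forall in H4. specialize (H4 z Hz1). lra. }
      assert (A2 : lsum (fun x => L x - U x) Ghi <= U t - U y).
      { apply IHn; try lra.
        - unfold Ghi. pose proof (filter_length_le (fun z => negb (p z)) G'). lia.
        - apply NoDup_filter; auto.
        - apply Forall_forall. intros z Hz.
          rewrite Forall_forall in Y3. specialize (Y3 z Hz).
          unfold Ghi in Hz. apply filter_In in Hz as [Hz1 Hz2].
          rewrite Forall_forall in H4. specialize (H4 z Hz1). lra. }
      assert (A3 : L m <= U y) by (apply (rl_le a b U m y); auto; try lra; apply HL; lra).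
      lra.
Qed.

Lemma merge_lists (P : R -> Prop) l1 l2 : Forall P l1 -> Forall P l2 ->
  exists F, NoDup F /\ Forall P F /\ incl l1 F /\ incl l2 F.
Proof.
  intros F1 F2. exists (nodup Req_EM_T (l1 ++ l2)).
  split; [apply NoDup_nodup|]. split; [|split].
  - apply Forall_forall. intros z Hz. apply nodup_In, in_app_or in Hz.
    rewrite Forall_forall in F1, F2. destruct Hz; auto.
  - intros z Hz. apply nodup_In, in_or_app; auto.
  - intros z Hz. apply nodup_In, in_or_app; auto.
Qed.

Lemma usum_sup (P : R -> Prop) x M : (forall z, P z -> 0 <= x z) ->
  (forall F, NoDup F -> Forall P F -> lsum x F <= M) -> exists S, has_usum P x S.
Proof.
  intros Hp HM.
  set (E := fun z => exists F, NoDup F /\ Forall P F /\ z = lsum x F).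
  assert (Hb : bound E) by (exists M; intros z [F [N [FP ->]]]; auto).
  assert (Hn : exists z, E z) by (exists 0; exists []; split; [constructor|split; [constructor|auto]]).
  destruct (completeness E Hb Hn) as [S [Hub Hlub]].
  exists S. intros eps He.
  assert (exists F0, NoDup F0 /\ Forall P F0 /\ lsum x F0 > S - eps).
  { apply Classical_Prop.NNPP. intro N.
    assert (S <= S - eps); [|lra].
    apply Hlub. intros z [F [NF [FP ->]]].
    destruct (Rle_dec (lsum x F) (S - eps)); auto. exfalso; apply N; exists F; repeat split; auto; lra. }
  destruct H as [F0 [N0 [P0 H0]]]. exists F0. split; auto. split; auto.
  intros F NF FP I.
  assert (lsum x F0 <= lsum x F).
  { apply lsum_incl_le; auto. intros z Hz. apply Hp. rewrite Forall_forall in FP; auto. }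
  assert (lsum x F <= S) by (apply Hub; exists F; auto).
  unfold lsum in *. apply Rabs_def1; lra.
Qed.

Lemma usum_lin P x y L1 L2 c d : has_usum P x L1 -> has_usum P y L2 ->
  has_usum P (fun z => c * x z + d * y z) (c * L1 + d * L2).
Proof.
  intros H1 H2 eps He.
  set (e' := eps / (Rabs c + Rabs d + 1)).
  assert (Hp : 0 < Rabs c + Rabs d + 1) by (pose proof (Rabs_pos c); pose proof (Rabs_pos d); lra).
  assert (He' : 0 < e') by (unfold e'; apply Rdiv_lt_0_compat; lra).
  destruct (H1 e' He') as [F1 [N1 [P1 Q1]]]. destruct (H2 e' He') as [F2 [N2 [P2 Q2]]].
  destruct (merge_lists P F1 F2 P1 P2) as [F0 [N0 [P0 [I1 I2]]]].
  exists F0. split; auto. split; auto. intros F NF FP I.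
  specialize (Q1 F NF FP (incl_tran I1 I)). specialize (Q2 F NF FP (incl_tran I2 I)).
  fold (lsum (fun z => c * x z + d * y z) F). rewrite lsum_lin.
  fold (lsum x F) in Q1. fold (lsum y F) in Q2.
  replace (c * lsum x F + d * lsum y F - (c * L1 + d * L2)) with (c * (lsum x F - L1) + d * (lsum y F - L2)) by ring.
  eapply Rle_lt_trans; [apply Rabs_triang|]. rewrite !Rabs_mult.
  assert (Rabs c * Rabs (lsum x F - L1) <= Rabs c * e') by (apply Rmult_le_compat_l; [apply Rabs_pos|lra]).
  assert (Rabs d * Rabs (lsum y F - L2) <= Rabs d * e') by (apply Rmult_le_compat_l; [apply Rabs_pos|lra]).
  assert (eps = (Rabs c + Rabs d + 1) * e') by (unfold e'; field; lra).
  nra.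
Qed.

Lemma usum_ext P x y L : (forall z, x z = y z) -> has_usum P x L -> has_usum P y L.
Proof.
  intros E H eps He. destruct (H eps He) as [F0 [N0 [P0 Q]]]. exists F0; repeat split; auto.
  intros F NF FP I. fold (lsum y F). rewrite <- (lsum_ext x y F) by auto. apply Q; auto.
Qed.

Lemma jump_part_spec a b phi t : (exists L, has_usum (fun s => a <= s < t) (right_jump b phi) L) ->
  has_usum (fun s => a <= s < t) (right_jump b phi) (jump_part a b phi t).
Proof. intros E. unfold jump_part. apply epsilon_spec. exact E. Qed.

Lemma approx a s t x1 x2 A1 A2 B1 B2 e : s <= t -> 0 < e ->
  has_usum (fun z => a <= z < t) x1 A1 -> has_usum (fun z => a <= z < t) x2 A2 ->
  has_usum (fun z => a <= z < s) x1 B1 -> has_usum (fun z => a <= z < s) x2 B2 ->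
  exists G, NoDup G /\ Forall (fun z => s <= z < t) G /\
    Rabs (A1 - B1 - lsum x1 G) < 2 * e /\ Rabs (A2 - B2 - lsum x2 G) < 2 * e.
Proof.
  intros Hst He HA1 HA2 HB1 HB2.
  destruct (HA1 e He) as [F1 [N1 [P1 Q1]]]. destruct (HA2 e He) as [F2 [N2 [P2 Q2]]].
  destruct (HB1 e He) as [F3 [N3 [P3 Q3]]]. destruct (HB2 e He) as [F4 [N4 [P4 Q4]]].
  set (Pt := fun z => a <= z < t).
  assert (P3' : Forall Pt F3) by (eapply Forall_impl; [|exact P3]; unfold Pt; intros; simpl; lra).
  assert (P4' : Forall Pt F4) by (eapply Forall_impl; [|exact P4]; unfold Pt; intros; simpl; lra).
  destruct (merge_lists Pt F1 F2 P1 P2) as [F12 [_ [P12 [I1 I2]]]].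
  destruct (merge_lists Pt F3 F4 P3' P4') as [F34 [_ [P34 [I3 I4]]]].
  destruct (merge_lists Pt F12 F34 P12 P34) as [F [NF [PF [I12 I34]]]].
  set (p := fun z => if Rlt_dec z s then true else false).
  set (Fs := filter p F). set (G := filter (fun z => negb (p z)) F).
  assert (NFs : NoDup Fs) by (apply NoDup_filter; auto).
  assert (PFs : Forall (fun z => a <= z < s) Fs).
  { apply Forall_forall. intros z Hz. unfold Fs in Hz. apply filter_In in Hz as [Hz1 Hz2].
    unfold p in Hz2. destruct (Rlt_dec z s); simpl in Hz2; [|discriminate].
    rewrite Forall_forall in PF. specialize (PF z Hz1). unfold Pt in PF. lra. }
  assert (incl_s : forall l, Forall (fun z => a <= z < s) l -> incl l F34 -> incl l Fs).
  { intros l Pl Il z Hz. unfold Fs. apply filter_In. split.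
    - apply I34, Il, Hz.
    - unfold p. rewrite Forall_forall in Pl. specialize (Pl z Hz). destruct (Rlt_dec z s); auto; lra. }
  specialize (Q1 F NF PF (incl_tran I1 I12)). specialize (Q2 F NF PF (incl_tran I2 I12)).
  specialize (Q3 Fs NFs PFs (incl_s F3 P3 I3)). specialize (Q4 Fs NFs PFs (incl_s F4 P4 I4)).
  fold (lsum x1 F) (lsum x2 F) (lsum x1 Fs) (lsum x2 Fs) in *.
  rewrite (lsum_filter x1 p F) in Q1. rewrite (lsum_filter x2 p F) in Q2.
  fold Fs G in Q1, Q2.
  exists G. split; [apply NoDup_filter; auto|]. split.
  - apply Forall_forall. intros z Hz. unfold G in Hz. apply filter_In in Hz as [Hz1 Hz2].
    unfold p in Hz2. destruct (Rlt_dec z s); simpl in Hz2; [discriminate|].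
    rewrite Forall_forall in PF. specialize (PF z Hz1). unfold Pt in PF. lra.
  - apply Rabs_def2 in Q1, Q2, Q3, Q4. split; apply Rabs_def1; lra.
Qed.

Lemma eps_le A B K : 0 <= K -> (forall e, 0 < e -> A <= B + K * e) -> A <= B.
Proof.
  intros HK Hall. destruct (Rle_dec A B) as [|N]; auto. exfalso.
  set (e := (A - B) / (2 * (K + 1))).
  assert (0 < e) by (unfold e; apply Rdiv_lt_0_compat; lra).
  specialize (Hall e H).
  assert (K * e < A - B).
  { unfold e. replace (K * ((A - B) / (2 * (K + 1)))) with ((A - B) * (K / (2 * (K+1)))) by (field; lra).
    assert (K / (2 * (K + 1)) < 1).
    { apply (Rmult_lt_reg_r (2 * (K+1))); [lra|]. unfold Rdiv. rewrite Rmult_assoc, Rinv_l by lra. lra. }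
    assert (0 <= K / (2 * (K + 1))) by (apply Rmult_le_pos; [lra|left; apply Rinv_0_lt_compat; lra]).
    nra. }
  lra.
Qed.

Lemma sym_lip a b u v H : (forall s t, a <= s -> s <= t -> t <= b -> Rabs (u t - u s) <= H * Rabs (v t - v s)) ->
  v_lipschitz a b u v H.
Proof.
  intros K t s Ht Hs. destruct (Rle_dec s t).
  - apply K; lra.
  - rewrite (Rabs_minus_sym (u t)), (Rabs_minus_sym (v t)). apply K; lra.
Qed.

Theorem mainTheorem4 (a b H : R) (f g : R -> R)
  (Hg_incr : nondecreasing_on a b g)
  (Hg_left : forall t, a < t < b -> left_continuous_at g t)
  (Hf : v_lipschitz a b f g H) :
  v_lipschitz a b (jump_part a b f) (jump_part a b g) H /\
  (nondecreasing_on a b f ->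
   v_lipschitz a b (cont_part a b f) (cont_part a b g) H).
Proof.
  set (U1 := fun z => H * g z + (-1) * f z).
  set (U2 := fun z => H * g z + 1 * f z).
  assert (HL : forall s t, a <= s -> s <= t -> t <= b -> Rabs (f t - f s) <= H * (g t - g s)).
  { intros s t Hs Hst Htb. specialize (Hf t s ltac:(lra) ltac:(lra)).
    assert (g s <= g t) by (apply Hg_incr; lra).
    rewrite (Rabs_right (g t - g s)) in Hf by lra. exact Hf. }
  assert (M1 : nondecreasing_on a b U1).
  { intros s t Hs Hst Htb. unfold U1. specialize (HL s t Hs Hst Htb).
    pose proof (Rle_abs (f t - f s)). lra. }
  assert (M2 : nondecreasing_on a b U2).
  { intros s t Hs Hst Htb. unfold U2. specialize (HL s t Hs Hst Htb).
    pose proof (Rle_abs (- (f t - f s))). rewrite Rabs_Ropp in H0. lra. }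
  set (rg := right_lim b g). set (rf := right_lim b f).
  assert (Lg : forall x, a <= x < b -> is_right_lim b g x (rg x)).
  { intros x Hx. apply right_lim_spec. eapply rl_mono_exists; eauto. }
  assert (Lf : forall x, a <= x < b -> is_right_lim b f x (rf x)).
  { intros x Hx. apply right_lim_spec.
    destruct (rl_mono_exists a b U1 x M1 Hx) as [L1 HL1].
    exists (H * rg x + (-1) * L1).
    apply (rl_ext b (fun z => H * g z + (-1) * U1 z)); [intro z; unfold U1; ring|].
    apply rl_lin; auto. }
  set (LU1 := fun x => H * rg x + (-1) * rf x).
  set (LU2 := fun x => H * rg x + 1 * rf x).
  assert (LL1 : forall x, a <= x < b -> is_right_lim b U1 x (LU1 x)).
  { intros x Hx. apply rl_lin; auto. }
  assert (LL2 : forall x, a <= x < b -> is_right_lim b U2 x (LU2 x)).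
  { intros x Hx. apply rl_lin; auto. }
  assert (Jf : forall x, a <= x < b -> Rabs (right_jump b f x) <= H * right_jump b g x).
  { intros x Hx. pose proof (rl_ge a b U1 x _ M1 Hx (LL1 x Hx)).
    pose proof (rl_ge a b U2 x _ M2 Hx (LL2 x Hx)).
    unfold U1, U2, LU1, LU2, right_jump in *. fold rf rg. apply Rabs_le. lra. }
  assert (Jg : forall x, a <= x < b -> 0 <= right_jump b g x).
  { intros x Hx. pose proof (rl_ge a b g x _ Hg_incr Hx (Lg x Hx)). unfold right_jump. fold rg. lra. }
  assert (Kg := K_lemma a b g rg Hg_incr Lg).
  assert (K1 := K_lemma a b U1 LU1 M1 LL1).
  assert (Sg : forall t, a <= t <= b -> has_usum (fun s => a <= s < t) (right_jump b g) (jump_part a b g t)).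
  { intros t Ht. apply jump_part_spec. apply (usum_sup _ _ (g t - g a)).
    - intros z Hz. apply Jg. lra.
    - intros F NF PF. apply (Kg (length F) F a t); auto; lra. }
  assert (Sf : forall t, a <= t <= b -> has_usum (fun s => a <= s < t) (right_jump b f) (jump_part a b f t)).
  { intros t Ht. apply jump_part_spec.
    destruct (usum_sup (fun s => a <= s < t) (fun x => LU1 x - U1 x) (U1 t - U1 a)) as [S1 HS1].
    - intros z Hz. pose proof (rl_ge a b U1 z _ M1 ltac:(lra) (LL1 z ltac:(lra))). lra.
    - intros F NF PF. apply (K1 (length F) F a t); auto; lra.
    - exists (H * jump_part a b g t + (-1) * S1).
      apply (usum_ext _ (fun z => H * right_jump b g z + (-1) * (LU1 z - U1 z))).
      + intro z. unfold LU1, U1, right_jump. fold rg rf. ring.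
      + apply usum_lin; auto. }
  assert (AP : forall s t e, a <= s -> s <= t -> t <= b -> 0 < e ->
     exists G, NoDup G /\ Forall (fun z => s <= z < t) G /\
       Rabs (jump_part a b f t - jump_part a b f s - lsum (right_jump b f) G) < 2 * e /\
       Rabs (jump_part a b g t - jump_part a b g s - lsum (right_jump b g) G) < 2 * e).
  { intros s t e Hs Hst Htb He. apply (approx a s t); auto; (apply Sf || apply Sg); lra. }
  assert (HabsH : 0 <= 2 + 2 * Rabs H) by (pose proof (Rabs_pos H); lra).
  split.
  - apply sym_lip. intros s t Hs Hst Htb.
    assert (Gpos : 0 <= jump_part a b g t - jump_part a b g s).
    { apply (eps_le _ _ 2); [lra|]. intros e He.
      destruct (AP s t e Hs Hst Htb He) as [G [NG [PG [A1 A2]]]].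
      assert (0 <= lsum (right_jump b g) G).
      { apply lsum_nonneg. intros z Hz. rewrite Forall_forall in PG. specialize (PG z Hz). apply Jg; lra. }
      apply Rabs_def2 in A2. lra. }
    rewrite (Rabs_right (jump_part a b g t - jump_part a b g s)) by lra.
    apply (eps_le _ _ (2 + 2 * Rabs H)); [lra|]. intros e He.
    destruct (AP s t e Hs Hst Htb He) as [G [NG [PG [A1 A2]]]].
    assert (B : Rabs (lsum (right_jump b f) G) <= lsum (fun z => H * right_jump b g z + 0 * right_jump b g z) G).
    { apply lsum_abs_le. intros z Hz. rewrite Forall_forall in PG. specialize (PG z Hz).
      rewrite Rmult_0_l, Rplus_0_r. apply Jf; lra. }
    rewrite lsum_lin in B.
    set (SF := lsum (right_jump b f) G) in *. set (SG := lsum (right_jump b g) G) in *.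
    set (DF := jump_part a b f t - jump_part a b f s) in *.
    set (DG := jump_part a b g t - jump_part a b g s) in *.
    assert (Rabs DF <= Rabs SF + 2 * e).
    { replace DF with (SF + (DF - SF)) by ring. eapply Rle_trans; [apply Rabs_triang|]. lra. }
    assert (H * SG <= H * DG + Rabs H * (2 * e)).
    { replace (H * SG) with (H * DG + H * (SG - DG)) by ring.
      pose proof (Rle_abs (H * (SG - DG))). rewrite Rabs_mult in H1.
      assert (Rabs (SG - DG) <= 2 * e) by (rewrite Rabs_minus_sym; lra).
      pose proof (Rabs_pos H). nra. }
    lra.
  - intro Mf. apply sym_lip. intros s t Hs Hst Htb.
    assert (Kf := K_lemma a b f rf Mf Lf).
    unfold cont_part.
    set (DF := jump_part a b f t - jump_part a b f s).
    set (DG := jump_part a b g t - jump_part a b g s).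
    replace (f t - jump_part a b f t - (f s - jump_part a b f s)) with (f t - f s - DF) by (unfold DF; ring).
    replace (g t - jump_part a b g t - (g s - jump_part a b g s)) with (g t - g s - DG) by (unfold DG; ring).
    assert (C1 : 0 <= f t - f s - DF).
    { apply (eps_le _ _ 2); [lra|]. intros e He.
      destruct (AP s t e Hs Hst Htb He) as [G [NG [PG [A1 A2]]]].
      assert (lsum (fun x => rf x - f x) G <= f t - f s) by (apply (Kf (length G)); auto).
      rewrite (lsum_ext _ (right_jump b f)) in H0 by (intros; reflexivity).
      apply Rabs_def2 in A1. fold DF in A1. lra. }
    assert (C2 : 0 <= g t - g s - DG).
    { apply (eps_le _ _ 2); [lra|]. intros e He.
      destruct (AP s t e Hs Hst Htb He) as [G [NG [PG [A1 A2]]]].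
      assert (lsum (fun x => rg x - g x) G <= g t - g s) by (apply (Kg (length G)); auto).
      rewrite (lsum_ext _ (right_jump b g)) in H0 by (intros; reflexivity).
      apply Rabs_def2 in A2. fold DG in A2. lra. }
    assert (C3 : f t - f s - DF <= H * (g t - g s - DG)).
    { apply (eps_le _ _ (2 + 2 * Rabs H)); [lra|]. intros e He.
      destruct (AP s t e Hs Hst Htb He) as [G [NG [PG [A1 A2]]]].
      assert (B : lsum (fun x => LU1 x - U1 x) G <= U1 t - U1 s) by (apply (K1 (length G)); auto).
      rewrite (lsum_ext _ (fun x => H * right_jump b g x + (-1) * right_jump b f x)) in B
        by (intros z _; unfold LU1, U1, right_jump; fold rg rf; ring).
      rewrite lsum_lin in B. unfold U1 in B.
      fold DF in A1. fold DG in A2.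
      set (SF := lsum (right_jump b f) G) in *. set (SG := lsum (right_jump b g) G) in *.
      assert (H * DG <= H * SG + Rabs H * (2 * e)).
      { replace (H * DG) with (H * SG + H * (DG - SG)) by ring.
        pose proof (Rle_abs (H * (DG - SG))). rewrite Rabs_mult in H0.
        assert (Rabs (DG - SG) <= 2 * e) by lra.
        pose proof (Rabs_pos H). nra. }
      apply Rabs_def2 in A1. lra. }
    rewrite (Rabs_right (f t - f s - DF)) by lra. rewrite (Rabs_right (g t - g s - DG)) by lra. exact C3.
Qed.
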